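(* Let $n\ge2$ and let $\mathbb{K}$ be a field with $\operatorname{char}\mathbb{K}$ either $0$ or coprime to both $n$ and $n-1$. Let $A_n=\mathbb{K}[x,y]/(y^{2n+3},\, x^ny^2-y^{n+2},\, x^{2n+1}-xy^{n+1})$. Then every $\mathbb{K}$-linear derivation $\partial\colon A_n\to A_n$ satisfies $\partial(y^{2n+1})=0$.
   Context: A derivation of $A_n$ is a $\mathbb{K}$-linear map $\partial\colon A_n\to A_n$ satisfying $\partial(uv)=\partial(u)v+u\partial(v)$ for all $u,v\in A_n$. *)

(* Defs.v *)
From HB Require Import structures.
From mathcomp Require Import all_boot all_order all_algebra.
From mathcomp Require Import ring_quotient generic_quotient.
From mathcomp Require Import mpoly.
From Stdlib Require Import ClassicalEpsilon.
From mathcomp Require Import ring.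

Set Implicit Arguments.
Unset Strict Implicit.
Unset Printing Implicit Defensive.

Import GRing.Theory.
Local Open Scope ring_scope.
Local Open Scope quotient_scope.

Section An.
Variables (K : fieldType) (n : nat).

Definition xP : {mpoly K[2]} := 'X_(@ord0 1).
Definition yP : {mpoly K[2]} := 'X_(@ord_max 1).

Definition gen1 : {mpoly K[2]} := yP ^+ (2 * n + 3).
Definition gen2 : {mpoly K[2]} := xP ^+ n * yP ^+ 2 - yP ^+ (n + 2).
Definition gen3 : {mpoly K[2]} := xP ^+ (2 * n + 1) - xP * yP ^+ (n + 1).

Definition in_idealP (p : {mpoly K[2]}) : Prop :=
  exists a b c : {mpoly K[2]}, p = a * gen1 + b * gen2 + c * gen3.

Definition An_ideal : pred {mpoly K[2]} :=
  fun p => if excluded_middle_informative (in_idealP p) then true else false.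

Lemma An_idealE p : reflect (in_idealP p) (p \in An_ideal).
Proof.
rewrite unfold_in /An_ideal.
by case: excluded_middle_informative => h; constructor.
Qed.

Lemma An_ideal_closed : idealr_closed An_ideal.
Proof.
split.
- by apply/An_idealE; exists 0, 0, 0; rewrite !mul0r !addr0.
- apply/An_idealE => -[a [b [c]]] /(congr1 (meval (fun _ => (0 : K)))).
  rewrite !mevalD !mevalM /gen1 /gen2 /gen3 !mevalB !mevalM !rmorphXn /=.
  rewrite /xP /yP !mevalXU meval1 !expr0n /= !addnS /=.
  by rewrite !(mulr0, mul0r, subr0, addr0) => /eqP; rewrite oner_eq0.
- move=> r u v /An_idealE [a [b [c ->]]] /An_idealE [a' [b' [c' ->]]].
  apply/An_idealE; exists (r * a + a'), (r * b + b'), (r * c + c').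
  by rewrite !mulrDl !mulrDr !mulrA; ring.
Qed.

HB.instance Definition _ := isIdealr.Build {mpoly K[2]} An_ideal An_ideal_closed.

Definition An_idealr : idealr {mpoly K[2]} := Idealr.clone _ An_ideal _.
Definition A_n := {ideal_quot An_idealr}.

Definition An_const (c : K) : A_n := \pi_A_n (c%:MP).
Definition An_y : A_n := \pi_A_n yP.

Definition is_derivation (d : A_n -> A_n) : Prop :=
  [/\ forall u v, d (u + v) = d u + d v,
      forall (c : K) u, d (An_const c * u) = An_const c * d u
    & forall u v, d (u * v) = d u * v + u * d v].

End An.

(* Main.v *)
Require Import Defs.
From HB Require Import structures.
From mathcomp Require Import all_boot all_order all_algebra.
From mathcomp Require Import ring_quotient generic_quotient mpoly.
From mathcomp Require Import ring zify.
Import GRing.Theory.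
Local Open Scope ring_scope.
Local Open Scope quotient_scope.
Section S.
Variables (K : fieldType) (n : nat).
Local Notation A := (A_n K n).
Definition piA : {mpoly K[2]} -> A := \pi_A.
Lemma piM : {morph piA : u v / u * v}. Proof. exact: rmorphM. Qed.
Lemma piB : {morph piA : u v / u - v}. Proof. exact: rmorphB. Qed.
Lemma piX k : {morph piA : u / u ^+ k}. Proof. exact: rmorphXn. Qed.

Lemma pi_ideal p : @in_idealP K n p -> piA p = 0.
Proof.
move=> h. have : p - 0 \in An_idealr K n by rewrite subr0; apply/An_idealE.
rewrite Quotient.idealrBE => /eqP. rewrite /piA => ->. exact: rmorph0.
Qed.
Lemma rel2 : piA (xP K) ^+ n * piA (yP K) ^+ 2 = piA (yP K) ^+ (n + 2).
Proof.
apply/eqP; rewrite -subr_eq0 -!piX -piM -piB; apply/eqP/pi_ideal.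
by exists 0, 1, 0; rewrite !mul0r mul1r add0r addr0.
Qed.
Lemma rel3 : piA (xP K) ^+ (2 * n + 1) = piA (xP K) * piA (yP K) ^+ (n + 1).
Proof.
apply/eqP; rewrite -subr_eq0 -!piX -piM -piB; apply/eqP/pi_ideal.
by exists 0, 0, 1; rewrite !mul0r mul1r !add0r.
Qed.
End S.

Lemma dX (K : fieldType) (n : nat) (d : A_n K n -> A_n K n) :
  is_derivation d -> forall u k, d (u ^+ k.+1) = k.+1%:R * u ^+ k * d u.
Proof.
case=> _ _ dM u; elim=> [|k IH]; first by rewrite expr1 expr0 mulr1 mul1r.
rewrite exprSr dM IH !exprS; ring.
Qed.

Lemma nat_nz (K : fieldType) (m : nat) :
  (forall p : nat, p \in [pchar K] -> coprime p m.+1) -> (m.+1)%:R != 0 :> K.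
Proof.
move=> h; apply/negP => /eqP/eqP h0.
have [p pc] := natf0_pchar (ltn0Sn m) h0.
have hp := h p pc.
have pd : (p %| m.+1)%N by rewrite (dvdn_pcharf pc).
move: hp; rewrite /coprime (gcdn_idPl pd) => /eqP p1.
by move: (pcharf_prime pc); rewrite p1.
Qed.

Local Close Scope quotient_scope.

Theorem theorem1p5 (K : fieldType) (n : nat) :
  (2 <= n)%N ->
  (forall p : nat, p \in [pchar K] -> coprime p n && coprime p n.-1) ->
  forall d : A_n K n -> A_n K n,
    is_derivation d ->
    d (An_y K n ^+ (2 * n + 1)) = 0.
Proof.
case: n => [|[|m]] // _ hch d hd.
have hd' := hd; case: hd' => dD _ dM.
have dXd := @dX K m.+2 d hd.
have cnz : (m.+1)%:R != 0 :> K.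
  by apply: nat_nz => p /hch /andP[].
set x := @piA K m.+2 (xP K); set y := @piA K m.+2 (yP K).
have r2 := rel2 K m.+2; have r3 := rel3 K m.+2.
rewrite -/x -/y in r2 r3.
rewrite (_ : (2 * m.+2 + 1 = (m + m + 4).+1)%N) in r3 *; last by lia.
rewrite (_ : (m.+2 + 2 = (m + 3).+1)%N) in r2; last by lia.
rewrite (_ : (m.+2 + 1 = (m + 2).+1)%N) in r3; last by lia.
have e2 := congr1 d r2; have e3 := congr1 d r3.
rewrite dM !dXd in e2; rewrite dM !dXd in e3.
have -> : An_y K m.+2 = y by [].
rewrite dXd.
rewrite !exprS !exprD ?expr0 ?expr1 ?mulr1 in r2 r3 e2 e3 *.
set P := x ^+ m in r2 r3 e2 e3 *; set Q := y ^+ m in r2 r3 e2 e3 *.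
set f := d x in e2 e3; set g := d y in e2 e3 *.
move/eqP: e2; rewrite -subr_eq0 => /eqP e2.
move/eqP: e3; rewrite -subr_eq0 => /eqP e3.
move/eqP: r2; rewrite -subr_eq0 => /eqP r2.
move/eqP: r3; rewrite -subr_eq0 => /eqP r3.
have Z0 : Q * Q * y ^+ 4 * g = 0.
  have key : (m.+1)%:R * (Q * Q * y ^+ 4 * g) = 0.
    move: e2 e3 r2 r3.
    match goal with |- ?L2 = 0 -> ?L3 = 0 -> ?A2 = 0 -> ?A3 = 0 -> _ =>
      move=> e2 e3 r2 r3;
      have -> : (m.+1)%:R * (Q * Q * y ^+ 4 * g) =
        P * x * L3 - 2 * Q * y * L2 - (m + m + 5)%:R * P * f * A3 + (m + 7)%:R * Q * g * A2
        by ring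
    end.
    by rewrite e2 e3 r2 r3 !mulr0 subrr !addr0 subr0.
  have hu : piA K m.+2 (((m.+1)%:R : K)^-1)%:MP * (m.+1)%:R = 1.
    have -> : (m.+1)%:R = piA K m.+2 ((m.+1)%:R : K)%:MP.
      by rewrite rmorph_nat /piA rmorph_nat.
    by rewrite -piM -rmorphM /= mulVf // /piA rmorph1.
  by rewrite -[LHS]mul1r -hu -mulrA key mulr0.
by rewrite -mulrA Z0 mulr0.
Qed.
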